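(* Let $G$ be the linear quadratic output (LQO) system $\dot x(t)=Ax(t)+Bu(t)$, $y(t)=Cx(t)+\big[x(t)^TM_1x(t),\dots,x(t)^TM_px(t)\big]^T$, with $A\in\mathbb{R}^{n\times n}$ Hurwitz, $B\in\mathbb{R}^{n\times m}$, $C\in\mathbb{R}^{p\times n}$ and symmetric $M_i\in\mathbb{R}^{n\times n}$, and let $\omega>0$. Then $$\|G\|_{\mathcal{H}_{2,\omega}}=\sqrt{\operatorname{trace}(B^TQ_\omega B)},$$ where $Q_\omega$ is the frequency-limited observability Gramian defined in the context.
   Context: The transfer functions of $G$ are $G_1(s)=C(sI-A)^{-1}B$ and $G_{2,i}(s_1,s_2)=B^T(s_1I-A)^{-*}M_i(s_2I-A)^{-1}B$ for $i=1,\dots,p$, where ${}^*$ denotes conjugate transpose and $(\cdot)^{-*}=((\cdot)^{-1})^*$. The frequency-limited $\mathcal{H}_2$ norm on $[0,\omega]$ rad/sec is $$\|G\|_{\mathcal{H}_{2,\omega}}=\Big[\operatorname{trace}\Big(\frac{1}{2\pi}\int_{-\omega}^{\omega}G_1^*(j\nu)G_1(j\nu)\,d\nu+\frac{1}{(2\pi)^2}\int_{-\omega}^{\omega}\int_{-\omega}^{\omega}\sum_{i=1}^pG_{2,i}^*(j\nu_1,j\nu_2)G_{2,i}(j\nu_1,j\nu_2)\,d\nu_1d\nu_2\Big)\Big]^{1/2}.$$ The frequency-limited Gramians are $P_\omega=\frac{1}{2\pi}\int_{-\omega}^{\omega}(j\nu I-A)^{-1}BB^T(j\nu I-A)^{-*}d\nu$,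 $Y_\omega=\frac{1}{2\pi}\int_{-\omega}^{\omega}(j\nu I-A)^{-*}C^TC(j\nu I-A)^{-1}d\nu$, $Z_\omega=\frac{1}{2\pi}\int_{-\omega}^{\omega}(j\nu I-A)^{-*}\big(\sum_{i=1}^pM_iP_\omega M_i\big)(j\nu I-A)^{-1}d\nu$, and $Q_\omega=Y_\omega+Z_\omega$. *)

(* Defs.v *)
From HB Require Import structures.
From mathcomp Require Import all_boot all_order all_algebra.
From mathcomp Require Import all_classical all_reals all_analysis.
From mathcomp Require Import complex.
Set Implicit Arguments. Unset Strict Implicit. Unset Printing Implicit Defensive.
Import Order.TTheory GRing.Theory Num.Theory.
Local Open Scope ring_scope.

Section LQO.
Variable R : realType.
Local Notation CC := (R[i]).

Definition toCmx (r c : nat) (X : 'M[R]_(r, c)) : 'M[CC]_(r, c) :=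
  map_mx (real_complex R) X.

Definition cadj (r c : nat) (X : 'M[CC]_(r, c)) : 'M[CC]_(c, r) :=
  (map_mx (@conjc R) X)^T.

Definition jw (nu : R) : CC := Complex 0 nu.

Definition resolv (n : nat) (A : 'M[R]_n) (s : CC) : 'M[CC]_n :=
  invmx (s%:M - toCmx A).

Definition hurwitz (n : nat) (A : 'M[R]_n) : Prop :=
  forall l : CC, eigenvalue (toCmx A) l -> @complex.Re R l < 0.

Definition cint (w : R) (f : R -> CC) : CC :=
  Complex (Rintegral (@lebesgue_measure R) `[- w, w]%classic (fun x => @complex.Re R (f x)))
          (Rintegral (@lebesgue_measure R) `[- w, w]%classic (fun x => @complex.Im R (f x))).

Definition cmx_int (r c : nat) (w : R) (F : R -> 'M[CC]_(r, c)) : 'M[CC]_(r, c) :=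
  \matrix_(i, j) cint w (fun x => F x i j).

Definition inv2pi : CC := real_complex R (2 * pi)^-1.

Variables (n m p : nat) (A : 'M[R]_n) (B : 'M[R]_(n, m)) (C : 'M[R]_(p, n))
  (M : 'I_p -> 'M[R]_n).

Definition G1 (s : CC) : 'M[CC]_(p, m) :=
  toCmx C *m resolv A s *m toCmx B.

Definition G2 (i : 'I_p) (s1 s2 : CC) : 'M[CC]_m :=
  toCmx B^T *m cadj (resolv A s1) *m toCmx (M i) *m resolv A s2 *m toCmx B.

Definition H2w_norm (w : R) : CC :=
  sqrtC (\tr (
    inv2pi *: cmx_int w (fun nu => cadj (G1 (jw nu)) *m G1 (jw nu))
  + (inv2pi ^+ 2) *: cmx_int w (fun nu2 => cmx_int w (fun nu1 =>
        \sum_(i < p) cadj (G2 i (jw nu1) (jw nu2)) *m G2 i (jw nu1) (jw nu2))))).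

Definition Pw (w : R) : 'M[CC]_n :=
  inv2pi *: cmx_int w (fun nu =>
    resolv A (jw nu) *m toCmx (B *m B^T) *m cadj (resolv A (jw nu))).

Definition Yw (w : R) : 'M[CC]_n :=
  inv2pi *: cmx_int w (fun nu =>
    cadj (resolv A (jw nu)) *m toCmx (C^T *m C) *m resolv A (jw nu)).

Definition Zw (w : R) : 'M[CC]_n :=
  inv2pi *: cmx_int w (fun nu =>
    cadj (resolv A (jw nu)) *m (\sum_(i < p) toCmx (M i) *m Pw w *m toCmx (M i))
      *m resolv A (jw nu)).

Definition Qw (w : R) : 'M[CC]_n := Yw w + Zw w.

End LQO.

(* Main.v *)
Require Import Defs.
From HB Require Import structures.
From mathcomp Require Import all_boot all_order all_algebra.
From mathcomp Require Import all_classical all_reals all_analysis.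
From mathcomp Require Import complex.
From mathcomp Require Import ring lra.
Import Order.TTheory GRing.Theory Num.Theory.
Import numFieldNormedType.Exports.
Local Open Scope ring_scope.
Set Warnings "-all".
Set Implicit Arguments. Unset Strict Implicit.

Section Helpers.
Variable R : realType.
Local Notation CC := (R[i]).
Local Notation Re := (@complex.Re R).
Local Notation Im := (@complex.Im R).

Definition ccont (f : R -> CC) :=
  continuous (fun x => Re (f x)) /\ continuous (fun x => Im (f x)).

Lemma ReD (x y : CC) : Re (x + y) = Re x + Re y. Proof. by case: x; case: y. Qed.
Lemma ImD (x y : CC) : Im (x + y) = Im x + Im y. Proof. by case: x; case: y. Qed.
Lemma ReM (x y : CC) : Re (x * y) = Re x * Re y - Im x * Im y. Proof. by case: x; case: y. Qed.
Lemma ImM (x y : CC) : Im (x * y) = Re x * Im y + Im x * Re y. Proof. case: x => a b; case: y => c d /=. rewrite addrC. done. Qed.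

Lemma ccont_cst (c : CC) : ccont (fun _ => c).
Proof. by split; apply: cst_continuous. Qed.

Lemma contD (f g : R -> R) : continuous f -> continuous g -> continuous (fun x => f x + g x).
Proof. by move=> hf hg x; exact: (@continuousD _ _ _ f g x (hf x) (hg x)). Qed.
Lemma contB (f g : R -> R) : continuous f -> continuous g -> continuous (fun x => f x - g x).
Proof. by move=> hf hg x; exact: (@continuousB _ _ _ f g x (hf x) (hg x)). Qed.
Lemma contM (f g : R -> R) : continuous f -> continuous g -> continuous (fun x => f x * g x).
Proof. by move=> hf hg x; exact: (@continuousM _ _ f g x (hf x) (hg x)). Qed.
Lemma contN (f : R -> R) : continuous f -> continuous (fun x => - f x).
Proof. by move=> hf x; exact: (@continuousN _ _ _ f x (hf x)). Qed.
Lemma contV (f : R -> R) : (forall x, f x != 0) -> continuous f -> continuous (fun x => (f x)^-1).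
Proof. by move=> nz hf x; exact: (@continuousV _ _ f x (nz x) (hf x)). Qed.

Lemma ccontD f g : ccont f -> ccont g -> ccont (fun x => f x + g x).
Proof.
move=> [f1 f2] [g1 g2]; split.
- have -> : (fun x => Re (f x + g x)) = (fun x => Re (f x) + Re (g x)).
    by apply/funext => x; rewrite ReD.
  exact: contD.
- have -> : (fun x => Im (f x + g x)) = (fun x => Im (f x) + Im (g x)).
    by apply/funext => x; rewrite ImD.
  exact: contD.
Qed.

Lemma ccontM f g : ccont f -> ccont g -> ccont (fun x => f x * g x).
Proof.
move=> [f1 f2] [g1 g2]; split.
- have -> : (fun x => Re (f x * g x)) = (fun x => Re (f x) * Re (g x) - Im (f x) * Im (g x)).
    by apply/funext => x; rewrite ReM.
  by apply: contB; apply: contM.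
- have -> : (fun x => Im (f x * g x)) = (fun x => Re (f x) * Im (g x) + Im (f x) * Re (g x)).
    by apply/funext => x; rewrite ImM.
  by apply: contD; apply: contM.
Qed.

Lemma ccontV f : (forall x, f x != 0) -> ccont f -> ccont (fun x => (f x)^-1).
Proof.
move=> nz [f1 f2].
have hn : forall x, Re (f x) ^+ 2 + Im (f x) ^+ 2 != 0.
  move=> x; move: (nz x); case: (f x) => a b /= hab.
  apply/negP => /eqP h.
  have ha : a = 0 by apply/eqP; rewrite -sqrf_eq0; apply/eqP; nra.
  have hb : b = 0 by apply/eqP; rewrite -sqrf_eq0; apply/eqP; nra.
  by move: hab; rewrite ha hb eqxx.
have cn : continuous (fun x => (Re (f x) ^+ 2 + Im (f x) ^+ 2)^-1).
  apply: contV => //.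
  have -> : (fun x => Re (f x) ^+ 2 + Im (f x) ^+ 2) = (fun x => Re (f x) * Re (f x) + Im (f x) * Im (f x)).
    by apply/funext => y; rewrite /= !expr2.
  by apply: contD; apply: contM.
split.
- have -> : (fun x => Re ((f x)^-1)) = (fun x => Re (f x) * (Re (f x) ^+ 2 + Im (f x) ^+ 2)^-1).
    by apply/funext => x; case: (f x).
  exact: contM.
- have -> : (fun x => Im ((f x)^-1)) = (fun x => - (Im (f x) * (Re (f x) ^+ 2 + Im (f x) ^+ 2)^-1)).
    by apply/funext => x; case: (f x) => a b /=.
  by apply: contN; apply: contM.
Qed.

Lemma ccontN f : ccont f -> ccont (fun x => - f x).
Proof.
move=> hf; have -> : (fun x => - f x) = (fun x => (-1) * f x).
  by apply/funext => x; rewrite mulN1r.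
by apply: ccontM => //; exact: ccont_cst.
Qed.

Lemma ccont_sum (I : Type) (s : seq I) (P : pred I) (F : I -> R -> CC) :
  (forall j, ccont (F j)) -> ccont (fun x => \sum_(j <- s | P j) F j x).
Proof.
move=> hF; elim: s => [|a s IH].
  by under eq_fun do rewrite big_nil; exact: ccont_cst.
under eq_fun do rewrite big_cons.
case: (P a) => //; exact: ccontD.
Qed.

Lemma ccont_prod (I : Type) (s : seq I) (P : pred I) (F : I -> R -> CC) :
  (forall j, ccont (F j)) -> ccont (fun x => \prod_(j <- s | P j) F j x).
Proof.
move=> hF; elim: s => [|a s IH].
  by under eq_fun do rewrite big_nil; exact: ccont_cst.
under eq_fun do rewrite big_cons.
case: (P a) => //; exact: ccontM.
Qed.

Variable w : R.
Local Notation mu := (@lebesgue_measure R).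

Lemma int_cont (g : R -> R) : continuous g -> mu.-integrable `[-w, w]%classic (EFin \o g).
Proof.
move=> hg; apply: continuous_compact_integrable; first exact: segment_compact.
exact: continuous_subspaceT.
Qed.

Lemma mitv : measurable (`[-w, w]%classic : set R).
Proof. exact: measurable_itv. Qed.

Lemma cint_add f g : ccont f -> ccont g ->
  cint w (fun x => f x + g x) = cint w f + cint w g.
Proof.
move=> [f1 f2] [g1 g2]; rewrite /cint.
have -> : (fun x => Re (f x + g x)) = (fun x => Re (f x) + Re (g x)) by apply/funext=> x; rewrite ReD.
have -> : (fun x => Im (f x + g x)) = (fun x => Im (f x) + Im (g x)) by apply/funext=> x; rewrite ImD.
rewrite RintegralD; [|exact: mitv|exact: int_cont|exact: int_cont].
rewrite RintegralD; [|exact: mitv|exact: int_cont|exact: int_cont].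
by [].
Qed.

Lemma cint_scale (c : CC) f : ccont f -> cint w (fun x => c * f x) = c * cint w f.
Proof.
move=> [f1 f2]; rewrite /cint.
have -> : (fun x => Re (c * f x)) = (fun x => Re c * Re (f x) - Im c * Im (f x)) by apply/funext=> x; rewrite ReM.
have -> : (fun x => Im (c * f x)) = (fun x => Re c * Im (f x) + Im c * Re (f x)) by apply/funext=> x; rewrite ImM.
have cc1 : continuous (fun _ : R => Re c) by exact: cst_continuous.
have cc2 : continuous (fun _ : R => Im c) by exact: cst_continuous.
rewrite RintegralB; [|exact: mitv|apply: int_cont; exact: contM|apply: int_cont; exact: contM].
rewrite RintegralD; [|exact: mitv|apply: int_cont; exact: contM|apply: int_cont; exact: contM].
rewrite !RintegralZl; try exact: mitv; try exact: int_cont.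
clear cc1 cc2; case: c => a b /=. by congr Complex; rewrite addrC.
Qed.

Lemma cint0 : cint w (fun _ => 0) = 0.
Proof.
rewrite /cint /=.
by rewrite Rintegral_cst ?mul0r //; exact: mitv.
Qed.

Lemma cint_sum (I : Type) (s : seq I) (F : I -> R -> CC) :
  (forall j, ccont (F j)) ->
  cint w (fun x => \sum_(j <- s) F j x) = \sum_(j <- s) cint w (F j).
Proof.
move=> hF; elim: s => [|a s IH].
  by under eq_fun do rewrite big_nil; rewrite big_nil cint0.
under eq_fun do rewrite big_cons.
rewrite big_cons cint_add ?IH //; exact: ccont_sum.
Qed.

Definition mcont r c (F : R -> 'M[CC]_(r, c)) := forall i j, ccont (fun x => F x i j).

Lemma mcont_cst r c (X : 'M[CC]_(r, c)) : mcont (fun _ => X).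
Proof. by move=> i j; exact: ccont_cst. Qed.

Lemma mcontM r k c (F : R -> 'M[CC]_(r, k)) (G : R -> 'M[CC]_(k, c)) :
  mcont F -> mcont G -> mcont (fun x => F x *m G x).
Proof.
move=> hF hG i j.
have -> : (fun x => (F x *m G x) i j) = (fun x => \sum_l F x i l * G x l j).
  by apply/funext => x; rewrite mxE.
apply: ccont_sum => l; exact: ccontM.
Qed.

Lemma mcontD r c (F G : R -> 'M[CC]_(r, c)) :
  mcont F -> mcont G -> mcont (fun x => F x + G x).
Proof.
move=> hF hG i j.
have -> : (fun x => (F x + G x) i j) = (fun x => F x i j + G x i j).
  by apply/funext => x; rewrite mxE.
exact: ccontD.
Qed.

Lemma mcont_sum r c (I : finType) (F : I -> R -> 'M[CC]_(r, c)) :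
  (forall k, mcont (F k)) -> mcont (fun x => \sum_k F k x).
Proof.
move=> hF i j.
have -> : (fun x => (\sum_k F k x) i j) = (fun x => \sum_k F k x i j).
  by apply/funext => x; rewrite summxE.
apply: ccont_sum => k; exact: hF.
Qed.

Lemma mcont_cadj r c (F : R -> 'M[CC]_(r, c)) : mcont F -> mcont (fun x => cadj (F x)).
Proof.
move=> hF i j.
have -> : (fun x => cadj (F x) i j) = (fun x => conjc (F x j i)).
  by apply/funext => x; rewrite /cadj !mxE.
case: (hF j i) => h1 h2; split.
- have -> : (fun x => Re (conjc (F x j i))) = (fun x => Re (F x j i)).
    by apply/funext => x; case: (F x j i).
  exact: h1.
- have -> : (fun x => Im (conjc (F x j i))) = (fun x => - Im (F x j i)).
    by apply/funext => x; case: (F x j i).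
  exact: contN.
Qed.

Lemma mcont_det k (F : R -> 'M[CC]_k) : mcont F -> ccont (fun x => \det (F x)).
Proof.
move=> hF; rewrite /determinant.
apply: ccont_sum => s; apply: ccontM; first exact: ccont_cst.
apply: ccont_prod => i; exact: hF.
Qed.

Lemma mcont_inv k (F : R -> 'M[CC]_k) : (forall x, \det (F x) != 0) -> mcont F ->
  mcont (fun x => invmx (F x)).
Proof.
move=> hd hF i j.
have -> : (fun x => invmx (F x) i j) =
   (fun x => (\det (F x))^-1 * ((-1) ^+ (j + i) * \det (row' j (col' i (F x))))).
  apply/funext => x; rewrite /invmx unitmxE unitfE hd.
  by rewrite !mxE /cofactor.
apply: ccontM; first by apply: ccontV => //; exact: mcont_det.
apply: ccontM; first exact: ccont_cst.
apply: mcont_det => a b.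
have -> : (fun x => row' j (col' i (F x)) a b) = (fun x => F x (lift j a) (lift i b)).
  by apply/funext => x; rewrite !mxE.
exact: hF.
Qed.

Lemma cmx_int_lin (I : finType) r c r' c' (X : I -> 'M[CC]_(r', r))
  (Y : I -> 'M[CC]_(c, c')) (F : R -> 'M[CC]_(r, c)) : mcont F ->
  cmx_int w (fun x => \sum_i X i *m F x *m Y i) = \sum_i X i *m cmx_int w F *m Y i.
Proof.
move=> hF; apply/matrixP => k l; rewrite mxE summxE.
have -> : (fun x => (\sum_i X i *m F x *m Y i) k l) =
   (fun x => \sum_i \sum_b \sum_a (X i k a * Y i b l) * F x a b).
  apply/funext => x; rewrite summxE; apply: eq_bigr => i _; rewrite mxE.
  apply: eq_bigr => b _; rewrite mxE mulr_suml; apply: eq_bigr => a _.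
  by rewrite mulrAC.
have hc : forall (i : I) b a, ccont (fun x => X i k a * Y i b l * F x a b).
  by move=> i b a; apply: ccontM; [exact: ccont_cst | exact: hF].
rewrite cint_sum; last by move=> i; do 2 (apply: ccont_sum => ?); exact: hc.
apply: eq_bigr => i _; rewrite mxE.
rewrite cint_sum; last by move=> b; apply: ccont_sum => ?; exact: hc.
apply: eq_bigr => b _; rewrite mxE mulr_suml.
rewrite cint_sum; last by move=> a; exact: hc.
apply: eq_bigr => a _; rewrite cint_scale; last exact: hF.
by rewrite mxE mulrAC.
Qed.

Lemma cmx_int1 r c r' c' (X : 'M[CC]_(r', r))
  (Y : 'M[CC]_(c, c')) (F : R -> 'M[CC]_(r, c)) : mcont F ->
  cmx_int w (fun x => X *m F x *m Y) = X *m cmx_int w F *m Y.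
Proof.
move=> hF; have := @cmx_int_lin 'I_1 _ _ _ _ (fun _ => X) (fun _ => Y) F hF.
by rewrite big_ord1; under eq_fun do rewrite big_ord1.
Qed.

Lemma cmx_intZ r c (a : CC) (F : R -> 'M[CC]_(r, c)) : mcont F ->
  cmx_int w (fun x => a *: F x) = a *: cmx_int w F.
Proof.
move=> hF; have := @cmx_int1 _ _ _ _ (a%:M) 1%:M F hF.
rewrite mul_scalar_mx mulmx1 => <-.
by congr cmx_int; apply/funext => x; rewrite mul_scalar_mx mulmx1.
Qed.

Lemma ccont_jw : ccont (fun x => jw x).
Proof. split; [exact: cst_continuous | by move=> x; exact: cvg_id]. Qed.

Lemma det_resolv_nz k (A : 'M[R]_k) : hurwitz A -> forall x, \det ((jw x)%:M - toCmx A) != 0.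
Proof.
move=> hA x; apply/negP => /det0P [v vnz hv].
have : eigenvalue (toCmx A) (jw x).
  apply/eigenvalueP; exists v => //.
  move: hv; rewrite mulmxBr mul_mx_scalar => /eqP; rewrite subr_eq0 => /eqP <-.
  by [].
by move/hA; rewrite /= ltxx.
Qed.

Lemma mcont_resolv k (A : 'M[R]_k) : hurwitz A -> mcont (fun x => resolv A (jw x)).
Proof.
move=> hA; rewrite /resolv; apply: mcont_inv; first exact: det_resolv_nz.
move=> i j.
have -> : (fun x => ((jw x)%:M - toCmx A) i j) = (fun x => jw x *+ (i == j) + - (toCmx A i j)).
  by apply/funext => x; rewrite !mxE.
apply: ccontD; last exact: ccont_cst.
case: (i == j).
- by under eq_fun do rewrite mulr1n; exact: ccont_jw.
- by under eq_fun do rewrite mulr0n; exact: ccont_cst.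
Qed.

End Helpers.
Lemma cadjM (R : realType) a b c (X : 'M[R[i]]_(a, b)) (Y : 'M[R[i]]_(b, c)) :
  cadj (X *m Y) = cadj Y *m cadj X.
Proof. by rewrite /cadj map_mxM trmx_mul. Qed.

Lemma cadj_toC (R : realType) a b (X : 'M[R]_(a, b)) : cadj (toCmx X) = toCmx X^T.
Proof. by apply/matrixP => i j; rewrite !mxE conjc_real. Qed.

Lemma cadjK (R : realType) a b (X : 'M[R[i]]_(a, b)) : cadj (cadj X) = X.
Proof. by apply/matrixP => i j; rewrite !mxE conjcK. Qed.

Lemma toCmxM (R : realType) a b c (X : 'M[R]_(a, b)) (Y : 'M[R]_(b, c)) :
  toCmx (X *m Y) = toCmx X *m toCmx Y.
Proof. by rewrite /toCmx map_mxM. Qed.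

Theorem proposition1 (R : realType) (n m p : nat) (A : 'M[R]_n)
  (B : 'M[R]_(n, m)) (C : 'M[R]_(p, n)) (M : 'I_p -> 'M[R]_n) (w : R) :
  hurwitz A ->
  (forall i, (M i)^T = M i) ->
  0 < w ->
  H2w_norm A B C M w = sqrtC (\tr (toCmx B^T *m Qw A B C M w *m toCmx B)).
Proof.
move=> hA hM hw.
have cR := mcont_resolv hA.
have cRa : mcont (fun x => cadj (resolv A (jw x))) by exact: mcont_cadj.
rewrite /H2w_norm; congr sqrtC; congr mxtrace.
rewrite /Qw mulmxDr mulmxDl; congr (_ + _).
- rewrite /Yw -scalemxAr -scalemxAl -cmx_int1; last first.
    by apply: mcontM => //; apply: mcontM => //; exact: mcont_cst.
  congr (_ *: _); congr cmx_int; apply/funext => nu.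
  by rewrite /G1 !cadjM !cadj_toC !toCmxM !mulmxA.
- set K := cmx_int w (fun x => resolv A (jw x) *m toCmx (B *m B^T) *m cadj (resolv A (jw x))).
  have cK : mcont (fun x => resolv A (jw x) *m toCmx (B *m B^T) *m cadj (resolv A (jw x))).
    by apply: mcontM => //; apply: mcontM => //; exact: mcont_cst.
  have E2 : forall y, cmx_int w (fun x => \sum_i cadj (G2 A B M i (jw x) (jw y)) *m G2 A B M i (jw x) (jw y))
     = \sum_i (toCmx B^T *m cadj (resolv A (jw y)) *m toCmx (M i)) *m K *m (toCmx (M i) *m resolv A (jw y) *m toCmx B).
    move=> y; rewrite /K -cmx_int_lin //; congr cmx_int; apply/funext => x.
    apply: eq_bigr => i _.
    by rewrite /G2 !cadjM !cadj_toC cadjK trmxK hM !toCmxM !mulmxA.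
  have -> : (fun nu2 => cmx_int w (fun nu1 => \sum_i cadj (G2 A B M i (jw nu1) (jw nu2)) *m G2 A B M i (jw nu1) (jw nu2)))
     = (fun y => \sum_i (toCmx B^T *m cadj (resolv A (jw y)) *m toCmx (M i)) *m K *m (toCmx (M i) *m resolv A (jw y) *m toCmx B)).
    by apply/funext => y; exact: E2.
  rewrite /Zw -scalemxAr -scalemxAl -cmx_int1; last first.
    by apply: mcontM => //; apply: mcontM => //; exact: mcont_cst.
  have -> : (fun x => toCmx B^T *m (cadj (resolv A (jw x)) *m (\sum_i toCmx (M i) *m Pw A B w *m toCmx (M i)) *m resolv A (jw x)) *m toCmx B)
     = (fun y => inv2pi R *: \sum_i (toCmx B^T *m cadj (resolv A (jw y)) *m toCmx (M i)) *m K *m (toCmx (M i) *m resolv A (jw y) *m toCmx B)).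
    apply/funext => y; rewrite /Pw -/K.
    rewrite !mulmxA mulmx_sumr !mulmx_suml scaler_sumr; apply: eq_bigr => i _.
    by do 6 rewrite -?scalemxAr -?scalemxAl; rewrite !mulmxA.
  rewrite cmx_intZ; last first.
    apply: mcont_sum => i.
    repeat first [exact: cR | exact: cRa | exact: mcont_cst | apply: mcontM].
  by rewrite scalerA expr2.
Qed.
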